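(* For $n\ge 1$ let $\varphi_n:=\forall x\forall y\,\big(\bigwedge_{i<n}(p_i(x)\leftrightarrow p_i(y))\to(p_n(x)\leftrightarrow p_n(y))\big)$, a formula of $\mathcal{FO}^m_{\mathrm{RCC8}}$. Then every $\mathcal{L}_{\mathrm{RCC8}}$-formula $\psi_n$ that is equivalent to $\varphi_n$ on the class $\mathcal{RS}$ of all region structures (i.e., for every region model $\mathfrak M$ based on a structure in $\mathcal{RS}$ and every region $s$, $\mathfrak M,s\models\psi_n$ iff $\mathfrak M\models\varphi_n$) has length $2^{\Omega(n)}$.
   Context: A (general) region structure is a relational structure $\langle W,\mathrm{dc},\mathrm{ec},\mathrm{po},\mathrm{eq},\mathrm{tpp},\mathrm{ntpp},\mathrm{tppi},\mathrm{ntppi}\rangle$ with $W\ne\emptyset$, whose eight binary relations are mutually disjoint and jointly exhaustive on $W\times W$, with $\mathrm{eq}$ the identity, $\mathrm{dc},\mathrm{ec},\mathrm{po}$ symmetric, $\mathrm{tppi},\mathrm{ntppi}$ the inverses of $\mathrm{tpp},\mathrm{ntpp}$, and satisfying the standard RCC8 composition table; $\mathcal{RS}$ is the class of all of them. $\mathcal{L}_{\mathrm{RCC8}}$ is the modal language with propositional variables $p_1,p_2,\dots$ (and $p_0$), $\neg,\wedge$, and box operators $[r]$ for each of the eight relations, interpreted in region models (region structure plus valuation $p_i^{\mathfrak M}\subseteq W$) by $\mathfrak M,s\models[r]\varphi$ iff $\mathfrak M,t\models\varphi$ for all $t$ with $(s,t)\in r$. $\mathcal{FO}^m_{\mathrm{RCC8}}$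 is first-order logic with equality, eight binary predicates for the relations and unary predicates $p_0,p_1,\dots$, interpreted in region models in the obvious way. *)

(* Defs.v *)
From Stdlib Require Import Arith List.

Inductive rcc8 : Type := DC | EC | PO | EQ | TPP | NTPP | TPPi | NTPPi.

(* The standard RCC8 composition table:
   rcc8_comp r1 r2 r3 = true  iff  r3 is listed in the entry r1 ; r2,
   i.e. x r1 y /\ y r2 z may give x r3 z. *)
Definition rcc8_comp (r1 r2 r3 : rcc8) : bool :=
  let all := true in
  let inl (l : list rcc8) := existsb (fun r => match r, r3 with
      | DC,DC | EC,EC | PO,PO | EQ,EQ | TPP,TPP | NTPP,NTPP
      | TPPi,TPPi | NTPPi,NTPPi => true | _,_ => false end) l in
  match r1, r2 with
  | EQ, _ => inl (r2 :: nil)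
  | _, EQ => inl (r1 :: nil)
  | DC, DC => all
  | DC, EC | DC, PO | DC, TPP | DC, NTPP => inl (DC::EC::PO::TPP::NTPP::nil)
  | DC, TPPi | DC, NTPPi => inl (DC::nil)
  | EC, DC => inl (DC::EC::PO::TPPi::NTPPi::nil)
  | EC, EC => inl (DC::EC::PO::TPP::TPPi::EQ::nil)
  | EC, PO => inl (DC::EC::PO::TPP::NTPP::nil)
  | EC, TPP => inl (EC::PO::TPP::NTPP::nil)
  | EC, NTPP => inl (PO::TPP::NTPP::nil)
  | EC, TPPi => inl (DC::EC::nil)
  | EC, NTPPi => inl (DC::nil)
  | PO, DC | PO, EC => inl (DC::EC::PO::TPPi::NTPPi::nil)
  | PO, PO => all
  | PO, TPP | PO, NTPP => inl (PO::TPP::NTPP::nil)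
  | PO, TPPi | PO, NTPPi => inl (DC::EC::PO::TPPi::NTPPi::nil)
  | TPP, DC => inl (DC::nil)
  | TPP, EC => inl (DC::EC::nil)
  | TPP, PO => inl (DC::EC::PO::TPP::NTPP::nil)
  | TPP, TPP => inl (TPP::NTPP::nil)
  | TPP, NTPP => inl (NTPP::nil)
  | TPP, TPPi => inl (DC::EC::PO::TPP::TPPi::EQ::nil)
  | TPP, NTPPi => inl (DC::EC::PO::TPPi::NTPPi::nil)
  | NTPP, DC | NTPP, EC => inl (DC::nil)
  | NTPP, PO => inl (DC::EC::PO::TPP::NTPP::nil)
  | NTPP, TPP | NTPP, NTPP => inl (NTPP::nil)
  | NTPP, TPPi => inl (DC::EC::PO::TPP::NTPP::nil)
  | NTPP, NTPPi => all
  | TPPi, DC => inl (DC::EC::PO::TPPi::NTPPi::nil)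
  | TPPi, EC => inl (EC::PO::TPPi::NTPPi::nil)
  | TPPi, PO => inl (PO::TPPi::NTPPi::nil)
  | TPPi, TPP => inl (PO::TPP::TPPi::EQ::nil)
  | TPPi, NTPP => inl (PO::TPP::NTPP::nil)
  | TPPi, TPPi => inl (TPPi::NTPPi::nil)
  | TPPi, NTPPi => inl (NTPPi::nil)
  | NTPPi, DC => inl (DC::EC::PO::TPPi::NTPPi::nil)
  | NTPPi, EC | NTPPi, PO | NTPPi, TPP => inl (PO::TPPi::NTPPi::nil)
  | NTPPi, NTPP => inl (PO::TPP::NTPP::TPPi::NTPPi::EQ::nil)
  | NTPPi, TPPi | NTPPi, NTPPi => inl (NTPPi::nil)
  end.

Record region_structure (W : Type) : Type := {
  rel : rcc8 -> W -> W -> Prop;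
  rs_nonempty : inhabited W;
  rs_exh : forall x y, exists r, rel r x y;
  rs_disj : forall r1 r2 x y, rel r1 x y -> rel r2 x y -> r1 = r2;
  rs_eq : forall x y, rel EQ x y <-> x = y;
  rs_dc_sym : forall x y, rel DC x y -> rel DC y x;
  rs_ec_sym : forall x y, rel EC x y -> rel EC y x;
  rs_po_sym : forall x y, rel PO x y -> rel PO y x;
  rs_tppi : forall x y, rel TPPi x y <-> rel TPP y x;
  rs_ntppi : forall x y, rel NTPPi x y <-> rel NTPP y x;
  rs_comp : forall r1 r2 r3 x y z,
      rel r1 x y -> rel r2 y z -> rel r3 x z -> rcc8_comp r1 r2 r3 = true
}.
Arguments rel {W} _ _ _ _.

Inductive mform : Type :=
  | MVar : nat -> mform
  | MNeg : mform -> mform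
  | MAnd : mform -> mform -> mform
  | MBox : rcc8 -> mform -> mform.

Fixpoint mlength (f : mform) : nat :=
  match f with
  | MVar _ => 1
  | MNeg g => S (mlength g)
  | MAnd g h => S (mlength g + mlength h)
  | MBox _ g => S (mlength g)
  end.

Fixpoint msat {W : Type} (S : region_structure W) (V : nat -> W -> Prop)
    (s : W) (f : mform) : Prop :=
  match f with
  | MVar i => V i s
  | MNeg g => ~ msat S V s g
  | MAnd g h => msat S V s g /\ msat S V s h
  | MBox r g => forall t, rel S r s t -> msat S V t g
  end.

Definition phi_holds {W : Type} (V : nat -> W -> Prop) (n : nat) : Prop :=
  forall x y : W, (forall i, i < n -> (V i x <-> V i y)) -> (V n x <-> V n y).

Definition equiv_phi_RS (psi : mform) (n : nat) : Prop :=
  forall (W : Type) (S : region_structure W) (V : nat -> W -> Prop) (s : W),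
    msat S V s psi <-> phi_holds V n.

(* Main.v *)
Require Import Defs.
From Stdlib Require Import Arith Classical.
Module Aux.
From mathcomp Require Import all_boot.
Set Implicit Arguments. Unset Strict Implicit. Unset Printing Implicit Defensive.

Definition drel (W : Type) (r : rcc8) (x y : W) : Prop :=
  (r = EQ /\ x = y) \/ (r = DC /\ x <> y).

Definition dstruct (W : Type) (w0 : W) : region_structure W.
Proof.
refine (@Build_region_structure W (@drel W) (inhabits w0) _ _ _ _ _ _ _ _ _).
- move=> x y; case: (classic (x = y)) => h; [exists EQ; left | exists DC; right]; by [].
- move=> r1 r2 x y [[-> e1]|[-> e1]] [[-> e2]|[-> e2]] //; by exfalso; auto.
- move=> x y; split; [by case=> [[_ ->]|[]] | by move=> ->; left].
- by move=> x y [[]|[_ h]] //; right; split => // e; apply: h.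
- by move=> x y [[]|[]].
- by move=> x y [[]|[]].
- by move=> x y; split => [[[]|[]]|[[]|[]]].
- by move=> x y; split => [[[]|[]]|[[]|[]]].
- move=> r1 r2 r3 x y z [[-> e1]|[-> e1]] [[-> e2]|[-> e2]] [[-> e3]|[-> e3]] //;
  subst; try by [];  exfalso; auto.
Defined.

Definition U (n : nat) := ({ffun 'I_n -> bool} * bool)%type.

Definition val (n : nat) (i : nat) (u : U n) : bool :=
  match (insub i : option 'I_n) with
  | Some j => u.1 j
  | None => if i == n then u.2 else false
  end.

Fixpoint bev (n : nat) (P : pred (U n)) (u : U n) (f : mform) : bool :=
  match f with
  | MVar i => val i u
  | MNeg g => ~~ bev P u g
  | MAnd g h => bev P u g && bev P u h
  | MBox DC g => [forall v, P v ==> bev P v g]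
  | MBox EQ g => bev P u g
  | MBox _ _ => true
  end.

Fixpoint ev (n : nat) (o : mform -> bool) (u : U n) (f : mform) : bool :=
  match f with
  | MVar i => val i u
  | MNeg g => ~~ ev o u g
  | MAnd g h => ev o u g && ev o u h
  | MBox DC g => o (MBox DC g)
  | MBox EQ g => ev o u g
  | MBox _ _ => true
  end.

Definition oP (n : nat) (P : pred (U n)) (h : mform) : bool :=
  match h with
  | MBox _ g => [forall v, P v ==> bev P v g]
  | _ => true
  end.

Lemma ev_oP n (P : pred (U n)) u f : ev (oP P) u f = bev P u f.
Proof.
elim: f u => [i|g IH|g IHg h IHh|r g IH] u //=; try by rewrite ?IH ?IHg ?IHh.
all: by case: r => //=; rewrite IH.
Qed.

Fixpoint subs (f : mform) : seq mform :=
  match f with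
  | MVar _ => [::]
  | MNeg g => subs g
  | MAnd g h => subs g ++ subs h
  | MBox DC g => MBox DC g :: subs g
  | MBox _ g => subs g
  end.

Lemma size_subs f : size (subs f) <= mlength f.
Proof.
elim: f => [i|g IH|g IHg h IHh|r g IH] //=.
- by apply: leqW.
- rewrite size_cat; apply: leqW; exact: leq_add.
- by case: r => //=; apply: leqW.
Qed.

Lemma subs_closed f g : List.In (MBox DC g) (subs f) ->
  forall h, List.In h (subs g) -> List.In h (subs f).
Proof.
elim: f => [i|g' IH|g1 IH1 g2 IH2|r g' IH] //=.
- move=> H0 h Hh; apply: List.in_or_app; case: (List.in_app_or _ _ _ H0) => H; [left|right]; eauto.
- case: r => //=; try by eauto.
  move=> [[<-]|H] h Hh; right; eauto.
Qed.

Lemma ev_agree n (o1 o2 : mform -> bool) (u : U n) f :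
  (forall h, List.In h (subs f) -> o1 h = o2 h) -> ev o1 u f = ev o2 u f.
Proof.
elim: f u => [i|g IH|g IHg h IHh|r g IH] u H //=.
- by rewrite IH.
- rewrite IHg ?IHh // => k Hk; apply: H; apply: List.in_or_app; auto.
- case: r H => //= H; try by apply: IH.
  by apply: H; left.
Qed.

Lemma flip n (P : pred (U n)) (u0 : U n) f :
  (forall u, bev P u f = bev [pred u | P u || (u == u0)] u f) \/
  (exists g, List.In (MBox DC g) (subs f) /\ oP P (MBox DC g) = true /\ bev P u0 g = false).
Proof.
set P' := [pred u | P u || (u == u0)].
elim: f => [i|g IH|g IHg h IHh|r g IH] /=.
- by left.
- case: IH => [H|[k [Hk Hr]]]; [left => u; by rewrite H | right; exists k; split => //].
- case: IHg => [Hg|[k [Hk Hr]]]; last first.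
    by right; exists k; split => //; apply: List.in_or_app; left.
  case: IHh => [Hh|[k [Hk Hr]]]; last first.
    by right; exists k; split => //; apply: List.in_or_app; right.
  by left => u; rewrite Hg Hh.
- case: r => /=; try (case: IH => [H|[k [Hk Hr]]]; [left => u; by rewrite ?H | right; exists k; split => //]).
  case: IH => [H|[k [Hk Hr]]]; last by right; exists k; split => //; right.
  case A: [forall v, P v ==> bev P v g].
  + case B: (bev P u0 g).
    * left => u; symmetry; apply/forallP => v; apply/implyP => /orP [Pv|/eqP ->].
        by rewrite -H; move/forallP: A => /(_ v) /implyP; apply.
      by rewrite -H.
    * by right; exists g; split; [left|split].
  + left => u; symmetry; apply/negbTE/negP => /forallP Hf.
    move/negbT: A => /negP; apply; apply/forallP => v; apply/implyP => Pv.
    by rewrite H; move: (Hf v) => /implyP; apply; rewrite Pv.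
Qed.

Definition W n (P : pred (U n)) := ({u : U n | P u} * bool)%type.
Definition V n (P : pred (U n)) : nat -> W P -> Prop := fun i w => val i (sval w.1).

Lemma msat_bev n (P : pred (U n)) (w0 : W P) w f :
  msat (dstruct w0) (@V n P) w f <-> bev P (sval w.1) f.
Proof.
elim: f w => [i|g IH|g IHg h IHh|r g IH] w /=.
- by [].
- rewrite IH; split => H; [by apply/negP | by apply/negP].
- rewrite IHg IHh; split; [by case=> -> -> | by move/andP].
- case: r => /=.
  + split.
    * move=> H; apply/forallP => v; apply/implyP => Pv.
      have := H (exist _ v Pv, ~~ w.2); rewrite IH /=; apply; right; split => //.
      by case: w {H} => ? [] [].
    * move=> /forallP H t [[//]|[_ _]]; rewrite IH.
      by case: t => [[v Pv] c] /=; move: (H v) => /implyP; apply.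
  + by split => // H t [[]|[]].
  + by split => // H t [[]|[]].
  + split; [move=> H; rewrite -IH; apply: H; by left | move=> H t [[_ <-]|[]] //; by rewrite IH].
  + by split => // H t [[]|[]].
  + by split => // H t [[]|[]].
  + by split => // H t [[]|[]].
  + by split => // H t [[]|[]].
Qed.

Definition T n := {ffun 'I_n -> bool}.
Definition Pg n (g : {ffun T n -> bool}) : pred (U n) := [pred u | u.2 == g u.1].
Definition Pb n (g : {ffun T n -> bool}) (t : T n) : pred (U n) :=
  [pred u | Pg g u || (u == (t, ~~ g t))].

Lemma val_lt n (j : 'I_n) (u : U n) : val (nat_of_ord j) u = u.1 j.
Proof. by rewrite /val valK. Qed.

Lemma val_n n (u : U n) : val n u = u.2.
Proof. by rewrite /val insubF ?ltnn // eqxx. Qed.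

Lemma phi_g n (g : {ffun T n -> bool}) : phi_holds (@V n (Pg g)) n.
Proof.
move=> [[[t b] Pu] c] [[[t' b'] Pu'] c'] /= H.
have et : t = t'.
  apply/ffunP => j; move: (H j (elimT ltP (ltn_ord j))).
  rewrite /V /= !val_lt /= => -[h1 h2]; by apply/idP/idP => [/h1|/h2].
rewrite /V /= !val_n /=; move: (Pu) (Pu'); rewrite /Pg /= => /eqP -> /eqP ->.
by rewrite et.
Qed.

Lemma not_phi n (g : {ffun T n -> bool}) t : ~ phi_holds (@V n (Pb g t)) n.
Proof.
have P1 : Pb g t (t, g t) by rewrite /Pb /Pg /= eqxx.
have P2 : Pb g t (t, ~~ g t) by rewrite /Pb /= eqxx orbT.
move=> H; move: (H (exist (Pb g t) _ P1, true) (exist (Pb g t) _ P2, true)).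
rewrite /V /= !val_n /=.
have : forall i, (i < n)%coq_nat -> val i (t, g t) <-> val i (t, ~~ g t).
  by move=> i /ltP hi; rewrite /val; case: insub => [j|] //=; rewrite (ltn_eqF hi).
move=> h /(_ h); by case: (g t); intuition.
Qed.

Lemma bev_differs n (g : {ffun T n -> bool}) t psi :
  equiv_phi_RS psi n ->
  bev (Pg g) (t, g t) psi = true /\ bev (Pb g t) (t, g t) psi = false.
Proof.
move=> E.
have P1 : Pg g (t, g t) by rewrite /Pg /= eqxx.
have P2 : Pb g t (t, g t) by rewrite /Pb /Pg /= eqxx.
split.
- pose w : W (Pg g) := (exist (Pg g) _ P1, true).
  have := proj2 (E _ (dstruct w) (@V n (Pg g)) w) (@phi_g n g).
  by rewrite msat_bev.
- pose w : W (Pb g t) := (exist (Pb g t) _ P2, true).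
  apply/negbTE/negP => h; apply: (@not_phi n g t).
  apply: (proj1 (E _ (dstruct w) (@V n (Pb g t)) w)).
  by rewrite msat_bev.
Qed.

Definition dp n (o : mform -> bool) (t : T n) (h : mform) : bool :=
  match h with
  | MBox DC c => o h && ev o (t, true) c && ~~ ev o (t, false) c
  | _ => false
  end.

Definition D n (L : seq mform) (o : mform -> bool) (t : T n) : bool :=
  has (dp o t) L.

Lemma has_In (A : Type) (p : A -> bool) (L : seq A) x : List.In x L -> p x -> has p L.
Proof. elim: L => //= y L IH [<- ->//|h px]; by rewrite IH ?orbT. Qed.

Lemma hasF_In (A : Type) (p : A -> bool) (L : seq A) :
  (forall x, List.In x L -> p x = false) -> has p L = false.
Proof. elim: L => //= y L IH H; rewrite H ?IH //; auto. Qed.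

Lemma has_eq_In (A : Type) (p q : A -> bool) (L : seq A) :
  (forall x, List.In x L -> p x = q x) -> has p L = has q L.
Proof. elim: L => //= y L IH H; rewrite H ?IH //; auto. Qed.

Lemma D_og n (g : {ffun T n -> bool}) t psi :
  equiv_phi_RS psi n -> D (subs psi) (oP (Pg g)) t = g t.
Proof.
move=> E; have [B1 B2] := bev_differs g t E.
case: (flip (Pg g) (t, ~~ g t) psi) => [H|[c [Hc [Ho Hb]]]].
  by move: B2; rewrite -H B1.
have Hall : forall v, Pg g v -> bev (Pg g) v c.
  by move=> v Pv; move: Ho => /= /forallP /(_ v) /implyP; apply.
rewrite /D; case gt: (g t).
- apply: (has_In Hc); rewrite /dp Ho /= !ev_oP.
  move: Hb; rewrite gt /= => ->; rewrite Hall // /Pg /= gt.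
- apply: hasF_In => h Hh; case: h Hh => // r c'; case: r => // Hh.
  rewrite /dp; case Ho': (oP (Pg g) (MBox DC c')) => //=.
  rewrite !ev_oP; apply/negbTE; rewrite negb_and negbK; apply/orP; right.
  move: Ho' => /= /forallP /(_ (t, false)) /implyP; apply; by rewrite /Pg /= gt.
Qed.

Definition rcc8_dec (a b : rcc8) : {a = b} + {a <> b}.
Proof. decide equality. Defined.
Definition mform_dec (a b : mform) : {a = b} + {a <> b}.
Proof. decide equality; [apply: PeanoNat.Nat.eq_dec | apply: rcc8_dec]. Defined.

Fixpoint idx (h : mform) (L : seq mform) : nat :=
  match L with
  | [::] => 0
  | x :: L' => if mform_dec h x then 0 else (idx h L').+1
  end.

Lemma idx_In h L : List.In h L -> idx h L < size L /\ nth (MVar 0) L (idx h L) = h.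
Proof.
elim: L => //= x L IH H; case: mform_dec => [e|ne]; first by subst.
case: H => [e|H]; first by case: ne.
by case: (IH H).
Qed.

Definition oc (L : seq mform) (c : {ffun 'I_(size L) -> bool}) (h : mform) : bool :=
  [exists i : 'I_(size L), (idx h L == i) && c i].

Definition enc n (psi : mform) (g : {ffun T n -> bool}) : {ffun 'I_(size (subs psi)) -> bool} :=
  [ffun i : 'I_(size (subs psi)) => oP (Pg g) (nth (MVar 0) (subs psi) i)].

Definition dec n (psi : mform) (c : {ffun 'I_(size (subs psi)) -> bool}) : {ffun T n -> bool} :=
  [ffun t : T n => D (subs psi) (oc c) t].

Lemma oc_enc n psi (g : {ffun T n -> bool}) h :
  List.In h (subs psi) -> oc (enc psi g) h = oP (Pg g) h.
Proof.
move=> Hh; have [lt e] := idx_In Hh.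
rewrite /oc; apply/idP/idP.
- move=> /existsP [i /andP [/eqP ei]]; rewrite /enc ffunE.
  by rewrite -ei e.
- move=> H; apply/existsP; exists (Ordinal lt); rewrite eqxx /= /enc ffunE /= e //.
Qed.

Lemma dec_enc n psi (g : {ffun T n -> bool}) :
  equiv_phi_RS psi n -> @dec n psi (enc psi g) = g.
Proof.
move=> E; apply/ffunP => t; rewrite /dec ffunE -(D_og g t E) /D.
apply: has_eq_In => h Hh; case: h Hh => // r c; case: r => // Hh.
rewrite /dp oc_enc //.
have ag : forall u : U n, ev (oc (enc psi g)) u c = ev (oP (Pg g)) u c.
  by move=> u; apply: ev_agree => k Hk; apply: oc_enc; apply: (subs_closed Hh).
by rewrite !ag.
Qed.

Lemma key n psi : equiv_phi_RS psi n -> 2 ^ n <= mlength psi.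
Proof.
move=> E.
have inj : injective (@enc n psi) by apply: (can_inj (@dec_enc n psi ^~ E)).
have := leq_card (enc psi) inj.
rewrite /T !card_ffun !card_bool !card_ord.
rewrite leq_exp2l // => H; apply: leq_trans H _; exact: size_subs.
Qed.

Lemma expn_pow m k : expn m k = Nat.pow m k.
Proof. by elim: k => // k IH; rewrite expnS IH. Qed.

Lemma key' n psi : equiv_phi_RS psi n -> Nat.le (Nat.pow 2 n) (mlength psi).
Proof. by move=> E; apply/leP; rewrite -expn_pow; apply: key. Qed.
End Aux.

Theorem theorem3p2 :
  exists k N : nat, 1 <= k /\
    forall n : nat, 1 <= n -> N <= n ->
      forall psi : mform, equiv_phi_RS psi n ->
        2 ^ (n / k) <= mlength psi.
Proof.
exists 1, 0; split; [auto|].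
intros n _ _ psi E; rewrite Nat.div_1_r; exact (Aux.key' E).
Qed.
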